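(* Let $F$ be an infinite field, $n\ge3$, and let $z_1,\dots,z_k$ be distinct variables of degrees $g_1,\dots,g_k\in\{1,\dots,n-1\}$ with $g_1+\dots+g_k\le n-1$, and $y_1,y_2,\dots$ distinct variables of degree $0$. Then the commutators $$[z_1,y_1,\dots,y_{t_1},z_2,y_{t_1+1},\dots,y_{t_1+t_2},z_3,\dots,z_k,y_{t_1+\dots+t_{k-1}+1},\dots,y_{t_1+\dots+t_k}]$$ ($t_1,\dots,t_k\ge0$) are linearly independent modulo the $T_{\mathbb{Z}_n}$-ideal $I$ of graded identities of $UT_n(F)^{(-)}$.
   Context: $UT_n(F)^{(-)}$: $n\times n$ upper triangular matrices with bracket $[a,b]=ab-ba$ and canonical $\mathbb{Z}_n$-grading (degree-$k$ component spanned by $e_{ij}$, $j-i=k$); elements of $\mathbb{Z}_n\setminus\{0\}$ are identified with $1,\dots,n-1$. $I$ is the set of polynomials in the free $\mathbb{Z}_n$-graded Lie algebra vanishing on $UT_n(F)^{(-)}$ under degree-respecting substitutions. Commutators are left normed. *)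

(* Defs.v *)
From HB Require Import structures.
From mathcomp Require Import all_boot all_order all_algebra.
Set Implicit Arguments. Unset Strict Implicit. Unset Printing Implicit Defensive.
Import GRing.Theory.
Local Open Scope ring_scope.

Definition infinite_field (F : fieldType) : Prop :=
  forall s : seq F, exists x : F, x \notin s.

Definition lie_br (F : fieldType) (n : nat) (a b : 'M[F]_n) : 'M[F]_n :=
  a *m b - b *m a.

Definition lnc (F : fieldType) (n : nat) (s : seq 'M[F]_n) : 'M[F]_n :=
  foldl (@lie_br F n) (head 0 s) (behead s).

(* Homogeneous element of degree g (1 <= g <= n-1) of the canonical
   Z_n-grading of UT_n(F): supported on entries (r,c) with c - r = g. *)
Definition homog_deg (F : fieldType) (n g : nat) (A : 'M[F]_n) : Prop :=
  forall r c : 'I_n, (c : nat) != (r + g)%N -> A r c = 0.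

Definition homog_deg0 (F : fieldType) (n : nat) (A : 'M[F]_n) : Prop :=
  forall r c : 'I_n, r != c -> A r c = 0.

(* Offset of the block of y's following z_{i}: t_1 + ... + t_{i-1}
   (0-based indexing: the y's after z_i are y_(off i), ..., y_(off i + t_i - 1)). *)
Definition yoff (k : nat) (t : {ffun 'I_k -> nat}) (i : 'I_k) : nat :=
  (\sum_(l < k | (l < i)%N) t l)%N.

Definition comm_word (F : fieldType) (n k : nat) (Z : 'I_k -> 'M[F]_n)
  (Y : nat -> 'M[F]_n) (t : {ffun 'I_k -> nat}) : seq 'M[F]_n :=
  flatten [seq Z i :: [seq Y (yoff t i + j)%N | j <- iota 0 (t i)] | i <- enum 'I_k].

Definition comm_eval (F : fieldType) (n k : nat) (Z : 'I_k -> 'M[F]_n)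
  (Y : nat -> 'M[F]_n) (t : {ffun 'I_k -> nat}) : 'M[F]_n :=
  lnc (comm_word Z Y t).

(* Main.v *)
Require Import Defs.
From HB Require Import structures.
From mathcomp Require Import all_boot all_order all_algebra.
Import GRing.Theory.
Local Open Scope ring_scope.

Lemma inf_seq (F : fieldType) : infinite_field F -> forall m, exists s : seq F, uniq s /\ size s = m.
Proof.
move=> hF; elim=> [|m [s [us ss]]]; first by exists [::].
have [x hx] := hF s; exists (x :: s); by rewrite /= hx us ss.
Qed.

Lemma poly_inf (F : fieldType) (P : {poly F}) : infinite_field F ->
  (forall x, P.[x] = 0) -> P = 0.
Proof.
move=> hF hP; apply/eqP; apply/negPn/negP => hne.
have [s [us ss]] := @inf_seq F hF (size P).
have H : all (root P) s by apply/allP => x _; rewrite /root hP.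
by have := max_poly_roots hne H us; rewrite ss ltnn.
Qed.
Lemma brY (F : fieldType) (N : nat) (a : F) (q : 'I_N.+1) (d : 'rV[F]_N.+1) :
  d 0 ord0 = 0 ->
  lie_br (a *: delta_mx ord0 q) (diag_mx d) = (a * d 0 q) *: delta_mx ord0 q.
Proof.
move=> d0; rewrite /lie_br mul_mx_diag mul_diag_mx; apply/matrixP=> r c; rewrite !mxE.
case: (r =P ord0) => [->|_]; case: (c =P q) => [->|_] /=; rewrite ?d0 ?mulr0 ?mul0r ?subr0 ?mulr1 //.
Qed.

Lemma brZ (F : fieldType) (N : nat) (a : F) (q q' : 'I_N.+1) :
  q' != ord0 ->
  lie_br (a *: delta_mx ord0 q) (delta_mx q q') = a *: delta_mx ord0 q'.
Proof.
move=> hq; rewrite /lie_br -scalemxAl -scalemxAr !mul_delta_mx_cond eqxx.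
by rewrite (negbTE hq) mulr0n scaler0 subr0.
Qed.

Lemma foldY (F : fieldType) (N : nat) (a : F) (q : 'I_N.+1) (d : 'rV[F]_N.+1)
  (T : Type) (s : seq T) :
  d 0 ord0 = 0 ->
  foldl (@lie_br F N.+1) (a *: delta_mx ord0 q) [seq diag_mx d | _ <- s]
  = (a * d 0 q ^+ size s) *: delta_mx ord0 q.
Proof.
move=> d0; elim: s a => [|_ s IH] a /=; first by rewrite expr0 mulr1.
rewrite brY // IH exprS. congr (_ *: _). by rewrite mulrA.
Qed.

Lemma foldB (F : fieldType) (N lim : nat) (d : 'rV[F]_N.+1) (pos : nat -> 'I_N.+1)
  (Zm : nat -> 'M[F]_N.+1) (T : nat -> nat) :
  d 0 ord0 = 0 ->
  (forall m, (m < lim)%N -> Zm m = delta_mx (pos m) (pos m.+1)) ->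
  (forall m, (m < lim)%N -> pos m.+1 != ord0) ->
  forall b a x, (a + b <= lim)%N ->
  foldl (@lie_br F N.+1) (x *: delta_mx ord0 (pos a))
    (flatten [seq Zm m :: [seq diag_mx d | _ <- iota 0 (T m)] | m <- iota a b])
  = (x * \prod_(m <- iota a b) d 0 (pos m.+1) ^+ T m) *: delta_mx ord0 (pos (a + b)%N).
Proof.
move=> d0 hZ hp; elim=> [|b IH] a x hab /=; first by rewrite big_nil mulr1 (addn0 a).
have ha : (a < lim)%N by apply: leq_trans hab; rewrite addnS ltnS leq_addr.
rewrite foldl_cat /= hZ // brZ ?hp // foldY // size_iota IH; last by rewrite addSnnS.
by rewrite big_cons mulrA addSnnS.
Qed.

From mathcomp Require Import zify.
Local Open Scope nat_scope.
Lemma incr_gt0 (p : nat -> nat) : (forall m, p m < p m.+1) -> forall m, p 0 < p m.+1.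
Proof. move=> hp; elim=> [|m IH] //; exact: ltn_trans IH (hp _). Qed.

Lemma digits (B : nat) : 0 < B -> forall K (p : nat -> nat) (dd dd' : nat -> nat),
  (forall m, p m < p m.+1) -> (forall m, m < K -> dd m < B) ->
  (forall m, m < K -> dd' m < B) ->
  \sum_(m < K) B ^ (p m) * dd m = \sum_(m < K) B ^ (p m) * dd' m ->
  forall m, m < K -> dd m = dd' m.
Proof.
move=> B0; elim=> [|K IH] p dd dd' hp hd hd' heq m hm //.
pose q m := p m.+1 - p 0 - 1.
have hq : forall m, q m < q m.+1.
  move=> i; have := hp i.+1; have := @incr_gt0 p hp i; rewrite /q; lia.
have hB : forall (e : nat -> nat), \sum_(m < K) B ^ (p (bump 0 m)) * e (bump 0 m)
   = B ^ p 0 * (B * \sum_(m < K) B ^ (q m) * e m.+1).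
  move=> e; rewrite !big_distrr; apply: eq_bigr => i _ /=; rewrite /bump leq0n add1n.
  have := @incr_gt0 p hp i; rewrite /q => h.
  rewrite mulnA mulnA -expnSr -expnD; congr (_ * _); congr (_ ^ _); lia.
move: heq; rewrite !big_ord_recl /= !hB -!mulnDr => /eqP; rewrite eqn_pmul2l ?expn_gt0 ?B0 //.
move=> /eqP heq.
have h0 : dd 0 = dd' 0.
  have := congr1 (modn^~ B) heq.
  by rewrite !(addnC (dd _)) !(addnC (dd' _)) !(mulnC B) !modnMDl ?modn_small ?hd ?hd'.
move: heq; rewrite h0 => /addnI /eqP; rewrite eqn_pmul2l // => /eqP heq.
case: m hm => [|m] hm //.
apply: (IH q (fun i => dd i.+1) (fun i => dd' i.+1)) => //.
- by move=> i hi; apply: hd.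
- by move=> i hi; apply: hd'.
Qed.

Local Open Scope ring_scope.

Theorem mainTheorem15 (F : fieldType) (n k : nat) (g : 'I_k -> nat)
  (hF : infinite_field F) (hn : (3 <= n)%N) (hk : (0 < k)%N)
  (hg : forall i, (1 <= g i <= n.-1)%N)
  (hsum : (\sum_(i < k) g i <= n.-1)%N)
  (ts : seq {ffun 'I_k -> nat}) (c : {ffun 'I_k -> nat} -> F)
  (huniq : uniq ts)
  (hid : forall (Z : 'I_k -> 'M[F]_n) (Y : nat -> 'M[F]_n),
      (forall i, homog_deg (g i) (Z i)) -> (forall j, homog_deg0 (Y j)) ->
      \sum_(t <- ts) c t *: comm_eval Z Y t = 0) :
  forall t, t \in ts -> c t = 0.
Proof.
destruct n as [|N]; first by [].
destruct k as [|K]; first by [].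
simpl in hg, hsum.
pose G m := g (inord m).
pose S m := (\sum_(l < m) G l)%N.
have SS : forall m, S m.+1 = (S m + G m)%N by move=> m; rewrite /S big_ord_recr.
have Gi : forall i : 'I_K.+1, G i = g i by move=> i; rewrite /G inord_val.
have Sinc : forall m, (m < K.+1)%N -> (S m < S m.+1)%N.
  by move=> m hm; rewrite SS -{1}(addn0 (S m)) ltn_add2l; have := hg (inord m); case/andP.
have Smono : forall j m, (S m <= S (m + j))%N.
  move=> j m; elim: j => [|j IH]; first by rewrite addn0.
  by rewrite addnS SS (leq_trans IH) // leq_addr.
have SK : (S K.+1 <= N)%N.
  by rewrite /S (eq_bigr (fun i : 'I_K.+1 => g i)) // => i _; rewrite Gi.
have Sle : forall m, (m <= K.+1)%N -> (S m <= N)%N.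
  move=> m hm; apply: leq_trans SK; rewrite -(subnKC hm); exact: Smono.
pose pos m : 'I_N.+1 := inord (S m).
have posv : forall m, (m <= K.+1)%N -> (pos m : nat) = S m.
  by move=> m hm; rewrite /pos inordK // ltnS Sle.
pose B := (\max_(t <- ts) \max_(i : 'I_K.+1) t i).+1.
pose d (x : F) : 'rV[F]_N.+1 := \row_(r < N.+1) (if (r : nat) == 0%N then 0 else x ^+ (B ^ r)).
pose Zmat (i : 'I_K.+1) : 'M[F]_N.+1 := delta_mx (pos i) (pos i.+1).
pose Ymat (x : F) := fun _ : nat => diag_mx (d x).
have d0 : forall x, d x 0 ord0 = 0 by move=> x; rewrite mxE.
have posS0 : forall m, (m < K.+1)%N -> pos m.+1 != ord0.
  move=> m hm; apply/eqP => /(congr1 val) /=; rewrite posv // SS.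
  by have := hg (inord m); case/andP; rewrite /G; case: (g _) => // ? _ _; rewrite addnS.
have pos0 : pos 0%N = ord0.
  by apply: val_inj; change (nat_of_ord (pos 0%N) = 0%N); rewrite posv // /S big_ord0.
have hZ : forall i, homog_deg (g i) (Zmat i).
  move=> i r c' hrc; rewrite mxE; case: (r =P pos i) => [hr|] //=; case: (c' =P pos i.+1) => [hc|] //=.
  exfalso; move: hrc; rewrite hr hc !posv // ?SS ?Gi ?eqxx //; exact: ltnW.
have hY : forall x j, homog_deg0 (Ymat x j).
  by move=> x j r c' hrc; rewrite /Ymat mxE (negbTE hrc) mulr0n.
have hev : forall x t, comm_eval Zmat (Ymat x) t =
   (\prod_(m <- iota 0 K.+1) d x 0 (pos m.+1) ^+ t (inord m)) *: delta_mx ord0 (pos K.+1).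
  move=> x t; rewrite /comm_eval /comm_word.
  have -> : [seq Zmat i :: [seq Ymat x (yoff t i + j)%N | j <- iota 0 (t i)] | i <- enum 'I_K.+1]
     = [seq Zmat (inord m) :: [seq diag_mx (d x) | _ <- iota 0 (t (inord m))] | m <- iota 0 K.+1].
    by rewrite -val_enum_ord -map_comp; apply: eq_map => i /=; rewrite inord_val.
  have hZm : forall m, (m < K.+1)%N -> Zmat (inord m) = delta_mx (pos m) (pos m.+1).
    by move=> m hm; rewrite /Zmat inordK.
  transitivity (foldl (@lie_br F N.+1) (1 *: delta_mx ord0 (pos 0%N))
    (flatten [seq Zmat (inord m) :: [seq diag_mx (d x) | _ <- iota 0 (t (inord m))] | m <- iota 0 K.+1])).
    rewrite /lnc /=. rewrite hZm // pos0 brZ ?scale1r //; exact: posS0.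
  rewrite (@foldB F N K.+1 (d x) pos _ _ (d0 x) hZm posS0) ?add0n // mul1r.
  done.
have Gpos : forall m, (1 <= G m)%N by move=> m; rewrite /G; case/andP: (hg (inord m)).
have Sinc' : forall m, (S m < S m.+1)%N.
  by move=> m; rewrite SS -{1}(addn0 (S m)) ltn_add2l.
pose E (t : {ffun 'I_K.+1 -> nat}) := (\sum_(m < K.+1) B ^ (S m.+1) * t (inord m))%N.
have hval : forall x (t : {ffun 'I_K.+1 -> nat}), \prod_(m <- iota 0 K.+1) d x 0 (pos m.+1) ^+ t (inord m) = x ^+ E t.
  move=> x t.
  have -> : iota 0 K.+1 = index_iota 0 K.+1 by rewrite /index_iota subn0.
  rewrite big_mkord /E -prodrXr; apply: eq_bigr => i _.
  rewrite mxE posv // exprM; have := Sinc' i; case: (S i.+1) => //.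
have hsum0 : forall x, \sum_(t <- ts) c t * x ^+ E t = 0.
  move=> x; have := hid Zmat (Ymat x) hZ (hY x).
  move/(congr1 (fun M : 'M[F]_N.+1 => M ord0 (pos K.+1))); rewrite summxE mxE => H; apply: eq_trans _ H.
  apply: eq_bigr => t _; rewrite hev !mxE hval !eqxx mulr1 //.
have hinj : forall t t', t \in ts -> t' \in ts -> E t = E t' -> t = t'.
  move=> t t' ht ht' he; apply/ffunP => i.
  have hb : forall u : {ffun 'I_K.+1 -> nat}, u \in ts -> forall m, (m < K.+1)%N -> (u (inord m) < B)%N.
    move=> u hu m _; rewrite ltnS; apply: leq_trans (@leq_bigmax _ (fun j => u j) (inord m)) _.
    exact: (@leq_bigmax_seq _ _ xpredT (fun u : {ffun 'I_K.+1 -> nat} => \max_(j < K.+1) u j) u hu).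
  have := @digits B (ltn0Sn _) K.+1 (fun m => S m.+1) (fun m => t (inord m)) (fun m => t' (inord m))
    (fun m => Sinc' m.+1) (hb t ht) (hb t' ht') he i (ltn_ord i).
  by rewrite inord_val.
pose P := \sum_(t <- ts) c t *: 'X^(E t).
have P0 : P = 0.
  apply: poly_inf hF _ => x; rewrite horner_sum; apply: eq_trans (hsum0 x); apply: eq_bigr => t _.
  by rewrite hornerZ hornerXn.
move=> t0 ht0; have := congr1 (fun p : {poly F} => p`_(E t0)) P0.
rewrite /= coef0 coef_sum (bigD1_seq t0) //= coefZ coefXn eqxx mulr1 big1_seq ?addr0 //.
move=> t /andP [tt ht]; rewrite coefZ coefXn.
case: eqP => [he|]; last by rewrite mulr0.
by move: tt; rewrite (hinj _ _ ht0 ht he) eqxx.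
Qed.
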